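(* Let $\Omega\subset\mathbb{C}$ be a domain, $D=(\mu,\mathcal{A},\mathcal{B},\mathcal{F})\in\mathcal{BV}(\Omega)$ with $\|\mu\|_\infty<1$, and suppose there is a $C^1$ diffeomorphism $\Phi:\Omega\to\Omega'$ onto a domain $\Omega'$ satisfying $\Phi_{\bar z}=\mu\,\Phi_z$ on $\Omega$. Let $\Psi:=\Phi^{-1}:\Omega'\to\Omega$, with coordinate $\zeta$ on $\Omega'$. Then $\Psi^*D=(\mu',\mathcal{A}',\mathcal{B}',\mathcal{F}')$ has $\mu'\equiv0$, i.e. it is the Vekua equation $w_{\bar\zeta}+\mathcal{A}'w+\mathcal{B}'\bar w=\mathcal{F}'$ on $\Omega'$, with \[ \mathcal{A}'=\overline{\Psi_\zeta}\,(\mathcal{A}\circ\Psi),\qquad \mathcal{B}'=\overline{\Psi_\zeta}\,(\mathcal{B}\circ\Psi),\qquad \mathcal{F}'=\overline{\Psi_\zeta}\,(\mathcal{F}\circ\Psi). \] In particular $D$ is diffeomorphism-equivalent to a classical Vekua equation.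
   Context: A domain is an open connected subset of $\mathbb{C}$. $\mathcal{BV}(\Omega)$ is the set of quadruples $(\mu,\mathcal{A},\mathcal{B},\mathcal{F})$ of continuous complex functions on $\Omega$ with $|\mu|<1$ pointwise; the associated equation is $w_{\bar z}-\mu w_z+\mathcal{A}w+\mathcal{B}\bar w=\mathcal{F}$. A diffeomorphism $\Phi:\Omega_1\to\Omega_2$ is a $C^1$ bijection with $C^1$ inverse and Jacobian $J=|\Phi_z|^2-|\Phi_{\bar z}|^2>0$. For $D\in\mathcal{BV}(\Omega_2)$ the pullback $\Phi^*D=(\mu^*,\mathcal{A}^*,\mathcal{B}^*,\mathcal{F}^* )$ is given, with $K:=\Phi_z+(\mu\circ\Phi)\overline{\Phi_{\bar z}}$, by $\mu^*=(\Phi_{\bar z}+(\mu\circ\Phi)\overline{\Phi_z})/K$, $\mathcal{A}^*=J(\mathcal{A}\circ\Phi)/K$, $\mathcal{B}^*=J(\mathcal{B}\circ\Phi)/K$, $\mathcal{F}^*=J(\mathcal{F}\circ\Phi)/K$; $D_1\sim_d D_2$ means $D_1=\Phi^*D_2$ for some diffeomorphism $\Phi$. *)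

(* Defs.v *)
From Stdlib Require Import Reals.
From Coquelicot Require Import Coquelicot.
Open Scope R_scope.

Definition connected_set (O : C -> Prop) : Prop :=
  forall U V : C -> Prop, open U -> open V ->
    (forall z, O z -> U z \/ V z) ->
    (forall z, O z -> U z -> V z -> False) ->
    (exists z, O z /\ U z) -> (exists z, O z /\ V z) -> False.

Definition is_domain (O : C -> Prop) : Prop :=
  open O /\ connected_set O /\ exists z, O z.

Definition pdx (f : C -> C) (z : C) : C :=
  (Derive (fun t : R => Re (f (z + RtoC t)%C)) 0,
   Derive (fun t : R => Im (f (z + RtoC t)%C)) 0).
Definition pdy (f : C -> C) (z : C) : C :=
  (Derive (fun t : R => Re (f (z + (0, t))%C)) 0,
   Derive (fun t : R => Im (f (z + (0, t))%C)) 0).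

Definition dz (f : C -> C) (z : C) : C := ((pdx f z - Ci * pdy f z) / 2)%C.
Definition dzb (f : C -> C) (z : C) : C := ((pdx f z + Ci * pdy f z) / 2)%C.

Definition C1_on (O : C -> Prop) (f : C -> C) : Prop :=
  forall z, O z ->
    ex_derive (fun t : R => Re (f (z + RtoC t)%C)) 0 /\
    ex_derive (fun t : R => Im (f (z + RtoC t)%C)) 0 /\
    ex_derive (fun t : R => Re (f (z + (0, t))%C)) 0 /\
    ex_derive (fun t : R => Im (f (z + (0, t))%C)) 0 /\
    continuous (pdx f) z /\ continuous (pdy f) z.

Definition jac (f : C -> C) (z : C) : R := (Cmod (dz f z))^2 - (Cmod (dzb f z))^2.

Definition diffeo_pair (O1 O2 : C -> Prop) (Phi Psi : C -> C) : Prop :=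
  (forall z, O1 z -> O2 (Phi z)) /\
  (forall w, O2 w -> O1 (Psi w)) /\
  (forall z, O1 z -> Psi (Phi z) = z) /\
  (forall w, O2 w -> Phi (Psi w) = w) /\
  C1_on O1 Phi /\ C1_on O2 Psi /\
  (forall z, O1 z -> 0 < jac Phi z).

Definition diffeo (O1 O2 : C -> Prop) (Phi : C -> C) : Prop :=
  exists Psi, diffeo_pair O1 O2 Phi Psi.

(** Coefficient quadruples (mu, A, B, F) of w_zbar - mu w_z + A w + B wbar = F. *)
Record eqdata := EqData { emu : C -> C; eA : C -> C; eB : C -> C; eF : C -> C }.

Definition BV (O : C -> Prop) (D : eqdata) : Prop :=
  forall z, O z ->
    continuous (emu D) z /\ continuous (eA D) z /\
    continuous (eB D) z /\ continuous (eF D) z /\ Cmod (emu D z) < 1.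

Definition Kfac (Phi : C -> C) (D : eqdata) (z : C) : C :=
  (dz Phi z + emu D (Phi z) * Cconj (dzb Phi z))%C.

Definition pullback (Phi : C -> C) (D : eqdata) : eqdata :=
  EqData
    (fun z => ((dzb Phi z + emu D (Phi z) * Cconj (dz Phi z)) / Kfac Phi D z)%C)
    (fun z => (RtoC (jac Phi z) * eA D (Phi z) / Kfac Phi D z)%C)
    (fun z => (RtoC (jac Phi z) * eB D (Phi z) / Kfac Phi D z)%C)
    (fun z => (RtoC (jac Phi z) * eF D (Phi z) / Kfac Phi D z)%C).

Definition eqdata_on (O : C -> Prop) (D1 D2 : eqdata) : Prop :=
  forall z, O z ->
    emu D1 z = emu D2 z /\ eA D1 z = eA D2 z /\
    eB D1 z = eB D2 z /\ eF D1 z = eF D2 z.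

Definition sim_d (O1 : C -> Prop) (D1 : eqdata) (O2 : C -> Prop) (D2 : eqdata) : Prop :=
  exists Phi, diffeo O1 O2 Phi /\ eqdata_on O1 D1 (pullback Phi D2).

(* Main.v *)
Require Import Defs.
From Stdlib Require Import Reals Lra FunctionalExtensionality.
From Coquelicot Require Import Coquelicot.
Open Scope R_scope.

Lemma cont_C_intro (f : C -> C) z :
  continuous (fun x => fst (f x)) z -> continuous (fun x => snd (f x)) z ->
  continuous f z.
Proof.
  intros H1 H2. apply filterlim_locally. intro eps.
  apply filterlim_locally with (eps := eps) in H1.
  apply filterlim_locally with (eps := eps) in H2.
  generalize (filter_and _ _ H1 H2). apply filter_imp. intros x [Ha Hb].
  split; assumption.
Qed.

Lemma cont_fst (f : C -> C) z : continuous f z -> continuous (fun x => fst (f x)) z.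
Proof.
  intro H. apply filterlim_locally. intro eps.
  apply filterlim_locally with (eps := eps) in H.
  revert H. apply filter_imp. intros x [Ha Hb]. exact Ha.
Qed.
Lemma cont_snd (f : C -> C) z : continuous f z -> continuous (fun x => snd (f x)) z.
Proof.
  intro H. apply filterlim_locally. intro eps.
  apply filterlim_locally with (eps := eps) in H.
  revert H. apply filter_imp. intros x [Ha Hb]. exact Hb.
Qed.

Lemma cont_Rmult (f g : C -> R) z : continuous f z -> continuous g z ->
  continuous (fun x => f x * g x) z.
Proof. intros Hf Hg. exact (@continuous_mult C_UniformSpace R_AbsRing f g z Hf Hg). Qed.
Lemma cont_Rplus (f g : C -> R) z : continuous f z -> continuous g z ->
  continuous (fun x => f x + g x) z.
Proof. intros Hf Hg. exact (@continuous_plus C_UniformSpace R_AbsRing R_NormedModule f g z Hf Hg). Qed.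
Lemma cont_Ropp (f : C -> R) z : continuous f z -> continuous (fun x => - f x) z.
Proof. intros Hf. exact (@continuous_opp C_UniformSpace R_AbsRing R_NormedModule f z Hf). Qed.

Lemma cont_Cplus (f g : C -> C) z : continuous f z -> continuous g z ->
  continuous (fun x => Cplus (f x) (g x)) z.
Proof. intros Hf Hg. exact (@continuous_plus C_UniformSpace C_AbsRing C_NormedModule f g z Hf Hg). Qed.

Lemma cont_Cmult (f g : C -> C) z : continuous f z -> continuous g z ->
  continuous (fun x => Cmult (f x) (g x)) z.
Proof.
  intros Hf Hg. apply cont_C_intro; simpl.
  - apply cont_Rplus. apply cont_Rmult; [apply cont_fst|apply cont_fst]; auto.
    apply cont_Ropp. apply cont_Rmult; [apply cont_snd|apply cont_snd]; auto.
  - apply cont_Rplus; apply cont_Rmult; first [apply cont_fst; auto | apply cont_snd; auto].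
Qed.

Lemma cont_Cconj (f : C -> C) z : continuous f z -> continuous (fun x => Cconj (f x)) z.
Proof.
  intros Hf. apply cont_C_intro; simpl. apply cont_fst; auto. apply cont_Ropp, cont_snd; auto.
Qed.

Lemma cont_Copp (f : C -> C) z : continuous f z -> continuous (fun x => Copp (f x)) z.
Proof. intros Hf. exact (@continuous_opp C_UniformSpace C_AbsRing C_NormedModule f z Hf). Qed.

Lemma cont_Cconst (c : C) z : continuous (fun _ : C => c) z.
Proof. apply continuous_const. Qed.

Lemma Derive_shift (h : R -> R) x : Derive (fun t => h (x + t)) 0 = Derive h x.
Proof.
  unfold Derive. f_equal. f_equal. apply functional_extensionality. intro e.
  rewrite Rplus_0_l, Rplus_0_r. reflexivity.
Qed.

Lemma is_derive_shift (h : R -> R) x l : is_derive (fun t => h (x + t)) 0 l -> is_derive h x l.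
Proof.
  intro H.
  assert (H1 : is_derive (fun s : R => s - x) x 1) by (auto_derive; auto; ring).
  assert (H0 : is_derive (fun t => h (x + t)) ((fun s => s - x) x) l) by (replace (x - x) with 0 by ring; exact H).
  generalize (is_derive_comp _ _ x l 1 H0 H1). intro H2.
  replace l with (scal 1 l) by (unfold scal; simpl; unfold mult; simpl; ring).
  eapply is_derive_ext; [|exact H2]. intro t. simpl. f_equal. ring.
Qed.

Lemma pdx_fst (f : C -> C) u v : fst (pdx f (u,v)) = Derive (fun s => Re (f (s, v))) u.
Proof.
  unfold pdx; simpl fst. rewrite <- (Derive_shift _ u). f_equal. apply functional_extensionality. intro t.
  unfold Cplus, RtoC; simpl. rewrite Rplus_0_r. reflexivity.
Qed.

Lemma Dx_shift (g : C -> R) u v : Derive (fun t => g ((u,v) + RtoC t)%C) 0 = Derive (fun s => g (s, v)) u.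
Proof.
  rewrite <- (Derive_shift _ u). f_equal. apply functional_extensionality. intro t.
  unfold Cplus, RtoC; simpl. rewrite Rplus_0_r. reflexivity.
Qed.
Lemma Dy_shift (g : C -> R) u v : Derive (fun t => g ((u,v) + (0,t))%C) 0 = Derive (fun s => g (u, s)) v.
Proof.
  rewrite <- (Derive_shift _ v). f_equal. apply functional_extensionality. intro t.
  unfold Cplus, RtoC; simpl. rewrite Rplus_0_r. reflexivity.
Qed.
Lemma Ex_shift (g : C -> R) u v : ex_derive (fun t => g ((u,v) + RtoC t)%C) 0 ->
  is_derive (fun s => g (s, v)) u (Derive (fun s => g (s, v)) u).
Proof.
  intro H. apply Derive_correct in H. rewrite Dx_shift in H. apply is_derive_shift.
  eapply is_derive_ext; [|exact H]. intro t. unfold Cplus, RtoC; simpl. rewrite Rplus_0_r. reflexivity.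
Qed.
Lemma Ey_shift (g : C -> R) u v : ex_derive (fun t => g ((u,v) + (0,t))%C) 0 ->
  is_derive (fun s => g (u, s)) v (Derive (fun s => g (u, s)) v).
Proof.
  intro H. apply Derive_correct in H. rewrite Dy_shift in H. apply is_derive_shift.
  eapply is_derive_ext; [|exact H]. intro t. unfold Cplus, RtoC; simpl. rewrite Rplus_0_r. reflexivity.
Qed.

Lemma diff_gen (g : C -> R) (O : C -> Prop) w1 w2 : open O -> O (w1,w2) ->
 (forall z, O z -> ex_derive (fun t => g (z + RtoC t)%C) 0 /\ ex_derive (fun t => g (z + (0,t))%C) 0) ->
 continuous (fun z => Derive (fun t => g (z + RtoC t)%C) 0) (w1,w2) ->
 differentiable_pt_lim (fun u v => g (u,v)) w1 w2 (Derive (fun s => g (s, w2)) w1) (Derive (fun s => g (w1, s)) w2).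
Proof.
  intros Hop HO Hd Hc.
  apply filterdiff_differentiable_pt_lim.
  eapply filterdiff_ext_lin.
  apply (is_derive_filterdiff (fun u v => g (u,v)) w1 w2 (fun u v => Derive (fun s => g (s,v)) u) (Derive (fun s => g (w1,s)) w2)).
  - generalize (Hop _ HO). apply filter_imp. intros [u1 u2] Hu. simpl.
    apply Ex_shift. apply (Hd _ Hu).
  - apply Ey_shift. apply (Hd _ HO).
  - assert (E : (fun u : R * R => Derive (fun s => g (s, snd u)) (fst u)) = (fun z => Derive (fun t => g (z + RtoC t)%C) 0)).
    { apply functional_extensionality. intros [u1 u2]. simpl. rewrite Dx_shift. reflexivity. }
    rewrite E. exact Hc.
  - intros y. reflexivity.
Qed.

Lemma chain_gen (g : C -> R) (Phi : C -> C) (dir : R -> C) w1 w2 lx ly l1 l2 lt (T : R -> R) :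
 differentiable_pt_lim (fun u v => g (u,v)) w1 w2 lx ly ->
 Re (Phi (dir 0)) = w1 -> Im (Phi (dir 0)) = w2 ->
 is_derive (fun t => Re (Phi (dir t))) 0 l1 ->
 is_derive (fun t => Im (Phi (dir t))) 0 l2 ->
 locally 0 (fun t => g (Phi (dir t)) = T t) ->
 is_derive T 0 lt ->
 lx * l1 + ly * l2 = lt.
Proof.
  intros Hd E1 E2 H1 H2 Hl Ht.
  rewrite <- E1, <- E2 in Hd.
  apply is_derive_Reals in H1. apply is_derive_Reals in H2.
  generalize (derivable_pt_lim_comp_2d _ _ _ _ _ _ _ _ Hd H1 H2). intro H.
  apply is_derive_Reals in H.
  assert (H' : is_derive (fun t => g (Phi (dir t))) 0 (lx * l1 + ly * l2)).
  { eapply is_derive_ext; [|exact H]. intro t. simpl. destruct (Phi (dir t)); reflexivity. }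
  eapply is_derive_ext_loc in H'; [|exact Hl].
  apply is_derive_unique in H'. apply is_derive_unique in Ht. rewrite <- H', <- Ht. reflexivity.
Qed.

Lemma loc_dx (O : C -> Prop) z : open O -> O z -> locally 0 (fun t => O (z + RtoC t)%C).
Proof.
  intros Hop Hz. destruct (Hop z Hz) as [eps He]. exists eps. intros t Ht. apply He.
  destruct z as [z1 z2]. unfold ball in *; simpl in *. unfold prod_ball.
  unfold ball; simpl. unfold AbsRing_ball, abs, minus, plus, opp in *; simpl in *.
  split; simpl. replace (z1 + t + - z1) with (t + - 0) by ring. exact Ht.
  replace (z2 + 0 + - z2) with 0 by ring. rewrite Rabs_R0. apply cond_pos.
Qed.
Lemma loc_dy (O : C -> Prop) z : open O -> O z -> locally 0 (fun t => O (z + (0,t))%C).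
Proof.
  intros Hop Hz. destruct (Hop z Hz) as [eps He]. exists eps. intros t Ht. apply He.
  destruct z as [z1 z2]. unfold ball in *; simpl in *. unfold prod_ball.
  unfold ball; simpl. unfold AbsRing_ball, abs, minus, plus, opp in *; simpl in *.
  split; simpl. 
  replace (z1 + 0 + - z1) with 0 by ring. rewrite Rabs_R0. apply cond_pos.
  replace (z2 + t + - z2) with (t + - 0) by ring. exact Ht.
Qed.

Lemma cplus0 (z : C) : (z + RtoC 0)%C = z.
Proof. destruct z; unfold Cplus, RtoC; simpl; f_equal; ring. Qed.
Lemma cplus0' (z : C) : (z + (0,0))%C = z.
Proof. destruct z; unfold Cplus; simpl; f_equal; ring. Qed.

Lemma chain4 (O O' : C -> Prop) (Phi Psi : C -> C) z :
 open O -> open O' -> C1_on O Phi -> C1_on O' Psi -> O z -> O' (Phi z) ->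
 (forall z, O z -> Psi (Phi z) = z) ->
 fst (pdx Psi (Phi z)) * fst (pdx Phi z) + fst (pdy Psi (Phi z)) * snd (pdx Phi z) = 1 /\
 fst (pdx Psi (Phi z)) * fst (pdy Phi z) + fst (pdy Psi (Phi z)) * snd (pdy Phi z) = 0 /\
 snd (pdx Psi (Phi z)) * fst (pdx Phi z) + snd (pdy Psi (Phi z)) * snd (pdx Phi z) = 0 /\
 snd (pdx Psi (Phi z)) * fst (pdy Phi z) + snd (pdy Psi (Phi z)) * snd (pdy Phi z) = 1.
Proof.
  intros Hop Hop' H1 H1' Hz Hw Hinv.
  destruct (H1 z Hz) as (Ex1 & Ex2 & Ey1 & Ey2 & _).
  case_eq (Phi z). intros w1 w2 Ew. rewrite Ew in Hw.
  destruct (H1' _ Hw) as (_ & _ & _ & _ & Cx & Cy).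
  assert (D1 : differentiable_pt_lim (fun u v => (fun p => Re (Psi p)) (u,v)) w1 w2
     (Derive (fun s => (fun p => Re (Psi p)) (s, w2)) w1) (Derive (fun s => (fun p => Re (Psi p)) (w1, s)) w2)).
  { apply (diff_gen (fun p => Re (Psi p)) O'); auto. intros q Hq. destruct (H1' q Hq) as (a & b & c & d & _). split; auto.
    exact (cont_fst _ _ Cx). }
  assert (D2 : differentiable_pt_lim (fun u v => (fun p => Im (Psi p)) (u,v)) w1 w2
     (Derive (fun s => (fun p => Im (Psi p)) (s, w2)) w1) (Derive (fun s => (fun p => Im (Psi p)) (w1, s)) w2)).
  { apply (diff_gen (fun p => Im (Psi p)) O'); auto. intros q Hq. destruct (H1' q Hq) as (a & b & c & d & _). split; auto.
    exact (cont_snd _ _ Cx). }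
  assert (P1x : fst (pdx Psi (w1,w2)) = Derive (fun s => (fun p => Re (Psi p)) (s, w2)) w1)
    by exact (Dx_shift (fun p => Re (Psi p)) w1 w2).
  assert (P2x : snd (pdx Psi (w1,w2)) = Derive (fun s => (fun p => Im (Psi p)) (s, w2)) w1)
    by exact (Dx_shift (fun p => Im (Psi p)) w1 w2).
  assert (P1y : fst (pdy Psi (w1,w2)) = Derive (fun s => (fun p => Re (Psi p)) (w1, s)) w2)
    by exact (Dy_shift (fun p => Re (Psi p)) w1 w2).
  assert (P2y : snd (pdy Psi (w1,w2)) = Derive (fun s => (fun p => Im (Psi p)) (w1, s)) w2)
    by exact (Dy_shift (fun p => Im (Psi p)) w1 w2).
  rewrite P1x, P2x, P1y, P2y.
  assert (R1 : Re (Phi (z + RtoC 0)%C) = w1) by (rewrite cplus0, Ew; reflexivity).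
  assert (I1 : Im (Phi (z + RtoC 0)%C) = w2) by (rewrite cplus0, Ew; reflexivity).
  assert (R2 : Re (Phi (z + (0,0))%C) = w1) by (rewrite cplus0', Ew; reflexivity).
  assert (I2 : Im (Phi (z + (0,0))%C) = w2) by (rewrite cplus0', Ew; reflexivity).
  apply Derive_correct in Ex1. apply Derive_correct in Ex2.
  apply Derive_correct in Ey1. apply Derive_correct in Ey2.
  assert (Lx : forall h : C -> R, locally 0 (fun t => h (Psi (Phi (z + RtoC t)%C)) = h (z + RtoC t)%C)).
  { intro h. generalize (loc_dx O z Hop Hz). apply filter_imp. intros t Ht. rewrite Hinv; auto. }
  assert (Ly : forall h : C -> R, locally 0 (fun t => h (Psi (Phi (z + (0,t))%C)) = h (z + (0,t))%C)).
  { intro h. generalize (loc_dy O z Hop Hz). apply filter_imp. intros t Ht. rewrite Hinv; auto. }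
  destruct z as [z1 z2].
  split; [|split; [|split]].
  - apply (chain_gen (fun p => Re (Psi p)) Phi (fun t => ((z1,z2) + RtoC t)%C) w1 w2 _ _ _ _ 1 (fun t => Re ((fun t => ((z1,z2) + RtoC t)%C) t)) D1 R1 I1 Ex1 Ex2).
    + apply (Lx Re).
    + unfold Cplus, RtoC; simpl. auto_derive; auto; ring.
  - apply (chain_gen (fun p => Re (Psi p)) Phi (fun t => ((z1,z2) + (0,t))%C) w1 w2 _ _ _ _ 0 (fun t => Re ((fun t => ((z1,z2) + (0,t))%C) t)) D1 R2 I2 Ey1 Ey2).
    + apply (Ly Re).
    + unfold Cplus, RtoC; simpl. auto_derive; auto; ring.
  - apply (chain_gen (fun p => Im (Psi p)) Phi (fun t => ((z1,z2) + RtoC t)%C) w1 w2 _ _ _ _ 0 (fun t => Im ((fun t => ((z1,z2) + RtoC t)%C) t)) D2 R1 I1 Ex1 Ex2).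
    + apply (Lx Im).
    + unfold Cplus, RtoC; simpl. auto_derive; auto; ring.
  - apply (chain_gen (fun p => Im (Psi p)) Phi (fun t => ((z1,z2) + (0,t))%C) w1 w2 _ _ _ _ 1 (fun t => Im ((fun t => ((z1,z2) + (0,t))%C) t)) D2 R2 I2 Ey1 Ey2).
    + apply (Ly Im).
    + unfold Cplus, RtoC; simpl. auto_derive; auto; ring.
Qed.

Lemma C1_cont (O : C -> Prop) (f : C -> C) w : open O -> C1_on O f -> O w -> continuous f w.
Proof.
  intros Hop H1 Hw. destruct w as [w1 w2].
  destruct (H1 _ Hw) as (_ & _ & _ & _ & Cx & _).
  assert (G : forall g : C -> R, (forall z, O z -> ex_derive (fun t => g (z + RtoC t)%C) 0 /\ ex_derive (fun t => g (z + (0,t))%C) 0) ->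
     continuous (fun z => Derive (fun t => g (z + RtoC t)%C) 0) (w1,w2) ->
     continuous g (w1,w2)).
  { intros g Hd Hc.
    generalize (diff_gen g O w1 w2 Hop Hw Hd Hc). intro D.
    assert (Dp : differentiable_pt (fun u v => g (u,v)) w1 w2) by (do 2 eexists; exact D).
    apply differentiable_continuity_pt in Dp.
    apply continuity_2d_pt_filterlim in Dp.
    assert (E : (fun z : R * R => g (fst z, snd z)) = g) by (apply functional_extensionality; intros [u v]; reflexivity).
    rewrite E in Dp. exact Dp. }
  apply cont_C_intro.
  - apply (G (fun p => Re (f p))). intros q Hq. destruct (H1 q Hq) as (a & b & c & d & _). split; auto.
    exact (cont_fst _ _ Cx).
  - apply (G (fun p => Im (f p))). intros q Hq. destruct (H1 q Hq) as (a & b & c & d & _). split; auto.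
    exact (cont_snd _ _ Cx).
Qed.

Lemma dz_cont (O : C -> Prop) (f : C -> C) w : C1_on O f -> O w -> continuous (dz f) w.
Proof.
  intros H1 Hw. destruct (H1 _ Hw) as (_ & _ & _ & _ & Cx & Cy).
  unfold dz, Cdiv, Cminus.
  apply cont_Cmult; [|apply cont_Cconst].
  apply cont_Cplus; auto. apply cont_Copp. apply cont_Cmult; auto. apply cont_Cconst.
Qed.
Lemma dzb_cont (O : C -> Prop) (f : C -> C) w : C1_on O f -> O w -> continuous (dz f) w.
Proof.
  intros H1 Hw. destruct (H1 _ Hw) as (_ & _ & _ & _ & Cx & Cy).
  unfold dz, Cdiv, Cminus.
  apply cont_Cmult; [|apply cont_Cconst].
  apply cont_Cplus; auto. apply cont_Copp. apply cont_Cmult; auto. apply cont_Cconst.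
Qed.

Lemma inv_real a1x a2x a1y a2y p1x p2x p1y p2y :
 p1x*a1x + p1y*a2x = 1 -> p1x*a1y + p1y*a2y = 0 -> p2x*a1x + p2y*a2x = 0 -> p2x*a1y + p2y*a2y = 1 ->
 (Cmod ((((a1x,a2x) - Ci*(a1y,a2y))/2)%C))^2 - (Cmod ((((a1x,a2x) + Ci*(a1y,a2y))/2)%C))^2 = a1x*a2y - a1y*a2x /\
 (a1x*a2y - a1y*a2x <> 0 ->
 ((((p1x,p2x) - Ci*(p1y,p2y))/2)%C = Cconj (((a1x,a2x) - Ci*(a1y,a2y))/2)%C / RtoC (a1x*a2y - a1y*a2x))%C /\
 ((((p1x,p2x) + Ci*(p1y,p2y))/2)%C = - (((a1x,a2x) + Ci*(a1y,a2y))/2)%C / RtoC (a1x*a2y - a1y*a2x))%C).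
Proof.
  intros E1 E2 E3 E4. split.
  { rewrite !Cmod2_alt. unfold Cdiv, Cinv, Cminus, Cplus, Copp, Cmult, Ci, RtoC; simpl. field. }
  intro Hd.
  assert (Q1 : p1x = a2y / (a1x*a2y - a1y*a2x)).
  { apply (Rmult_eq_reg_r (a1x*a2y - a1y*a2x)); auto. field_simplify; auto.
    transitivity (a2y*(p1x*a1x + p1y*a2x) - a2x*(p1x*a1y + p1y*a2y)). ring. rewrite E1, E2. ring. }
  assert (Q2 : p1y = - a1y / (a1x*a2y - a1y*a2x)).
  { apply (Rmult_eq_reg_r (a1x*a2y - a1y*a2x)); auto. field_simplify; auto.
    transitivity (a1x*(p1x*a1y + p1y*a2y) - a1y*(p1x*a1x + p1y*a2x)). ring. rewrite E1, E2. ring. }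
  assert (Q3 : p2x = - a2x / (a1x*a2y - a1y*a2x)).
  { apply (Rmult_eq_reg_r (a1x*a2y - a1y*a2x)); auto. field_simplify; auto.
    transitivity (a2y*(p2x*a1x + p2y*a2x) - a2x*(p2x*a1y + p2y*a2y)). ring. rewrite E3, E4. ring. }
  assert (Q4 : p2y = a1x / (a1x*a2y - a1y*a2x)).
  { apply (Rmult_eq_reg_r (a1x*a2y - a1y*a2x)); auto. field_simplify; auto.
    transitivity (a1x*(p2x*a1y + p2y*a2y) - a1y*(p2x*a1x + p2y*a2x)). ring. rewrite E3, E4. ring. }
  subst p1x p1y p2x p2y.
  split; unfold Cdiv, Cinv, Cminus, Cplus, Copp, Cmult, Cconj, Ci, RtoC; simpl;
    apply injective_projections; simpl; field; auto.
Qed.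

Lemma conjR (r : R) : Cconj (RtoC r) = RtoC r.
Proof. unfold Cconj, RtoC; simpl. f_equal. ring. Qed.

Lemma RtoC_neq (r : R) : r <> 0 -> RtoC r <> 0%C.
Proof. intros H E. apply H. unfold RtoC in E. injection E. auto. Qed.

Lemma calg (a b c d mu : C) (J Jp : R) :
 c = (Cconj a / RtoC J)%C -> d = (- b / RtoC J)%C -> b = (mu * a)%C -> Cmod mu < 1 -> J <> 0 ->
 RtoC J = (a * Cconj a - b * Cconj b)%C -> RtoC Jp = (c * Cconj c - d * Cconj d)%C ->
 (forall A, (RtoC Jp * A / (c + mu * Cconj d) = Cconj c * A)%C) /\
 ((d + mu * Cconj c) / (c + mu * Cconj d) = 0)%C /\
 (mu = (b + 0 * Cconj a) / (a + 0 * Cconj b))%C /\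
 (forall A, A = (RtoC J * (Cconj c * A) / (a + 0 * Cconj b))%C).
Proof.
  intros Hc Hd Hb Hmu HJ0 HJ HJp.
  assert (Jn : RtoC J <> 0%C) by (apply RtoC_neq; auto).
  subst b.
  assert (Ha : a <> 0%C).
  { intro E. subst a. apply HJ0. apply RtoC_inj. rewrite HJ. unfold Cconj, Cmult, Cminus, Cplus, Copp, RtoC; simpl.
    apply injective_projections; simpl; ring. }
  assert (Hca : Cconj a <> 0%C).
  { intro E. apply Ha. rewrite <- (Cconj_conj a), E. unfold Cconj, RtoC; simpl. apply injective_projections; simpl; ring. }
  assert (Hm : (1 - mu * Cconj mu)%C <> 0%C).
  { rewrite <- Cmod2_conj. rewrite <- RtoC_minus. apply RtoC_neq.
    assert (0 <= Cmod mu) by apply Cmod_ge_0. nra. }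
  assert (Hcc : Cconj c = (a / RtoC J)%C).
  { rewrite Hc. unfold Cdiv. rewrite Cmult_conj, Cconj_conj, Cinv_conj, conjR; auto. }
  assert (Hdc : Cconj d = (- (Cconj mu * Cconj a) / RtoC J)%C).
  { rewrite Hd. unfold Cdiv. rewrite Cmult_conj, Copp_conj, Cmult_conj, Cinv_conj, conjR; auto. }
  assert (HK : (c + mu * Cconj d)%C = (Cconj a * (1 - mu * Cconj mu) / RtoC J)%C).
  { rewrite Hdc, Hc. field. auto. }
  rewrite HK. rewrite HJp. rewrite Hcc, Hdc. rewrite Hc, Hd.
  split; [|split; [|split]].
  - intro A. field. repeat split; auto.
  - field. repeat split; auto.
  - field. auto.
  - intro A. field. auto.
Qed.

Lemma jacC (f : C -> C) z : RtoC (jac f z) = (dz f z * Cconj (dz f z) - dzb f z * Cconj (dzb f z))%C.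
Proof. unfold jac. rewrite RtoC_minus, !Cmod2_conj. reflexivity. Qed.

Lemma key (Phi Psi : C -> C) z :
 fst (pdx Psi (Phi z)) * fst (pdx Phi z) + fst (pdy Psi (Phi z)) * snd (pdx Phi z) = 1 ->
 fst (pdx Psi (Phi z)) * fst (pdy Phi z) + fst (pdy Psi (Phi z)) * snd (pdy Phi z) = 0 ->
 snd (pdx Psi (Phi z)) * fst (pdx Phi z) + snd (pdy Psi (Phi z)) * snd (pdx Phi z) = 0 ->
 snd (pdx Psi (Phi z)) * fst (pdy Phi z) + snd (pdy Psi (Phi z)) * snd (pdy Phi z) = 1 ->
 jac Phi z <> 0 ->
 dz Psi (Phi z) = (Cconj (dz Phi z) / RtoC (jac Phi z))%C /\
 dzb Psi (Phi z) = (- dzb Phi z / RtoC (jac Phi z))%C.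
Proof.
  unfold jac; unfold dz, dzb.
  destruct (pdx Phi z) as [a1x a2x], (pdy Phi z) as [a1y a2y], (pdx Psi (Phi z)) as [p1x p2x], (pdy Psi (Phi z)) as [p1y p2y].
  intros E1 E2 E3 E4 Hj. cbn [fst snd] in E1, E2, E3, E4.
  destruct (inv_real a1x a2x a1y a2y p1x p2x p1y p2y E1 E2 E3 E4) as [Hd Hr].
  rewrite Hd in *. apply Hr; auto.
Qed.

Theorem proposition6p1 (O O' : C -> Prop) (D : eqdata) (Phi Psi : C -> C) :
  is_domain O -> is_domain O' -> BV O D ->
  (exists k : R, k < 1 /\ forall z, O z -> Cmod (emu D z) <= k) ->
  diffeo_pair O O' Phi Psi ->
  (forall z, O z -> dzb Phi z = (emu D z * dz Phi z)%C) ->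
  let D' := EqData (fun _ => 0%C)
              (fun w => (Cconj (dz Psi w) * eA D (Psi w))%C)
              (fun w => (Cconj (dz Psi w) * eB D (Psi w))%C)
              (fun w => (Cconj (dz Psi w) * eF D (Psi w))%C) in
  eqdata_on O' (pullback Psi D) D' /\ BV O' D' /\ sim_d O D O' D'.
Proof.
  intros Hdom Hdom' HBV _ Hpair Hbel D'.
  assert (Hpair' := Hpair).
  destruct Hpair as (HPhi & HPsi & Hinv1 & Hinv2 & C1Phi & C1Psi & Hjac).
  destruct Hdom as [Hop _]. destruct Hdom' as [Hop' _].
  assert (K : forall z, O z ->
    (forall A, (RtoC (jac Psi (Phi z)) * A / (dz Psi (Phi z) + emu D z * Cconj (dzb Psi (Phi z))) = Cconj (dz Psi (Phi z)) * A)%C) /\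
    ((dzb Psi (Phi z) + emu D z * Cconj (dz Psi (Phi z))) / (dz Psi (Phi z) + emu D z * Cconj (dzb Psi (Phi z))) = 0)%C /\
    (emu D z = (dzb Phi z + 0 * Cconj (dz Phi z)) / (dz Phi z + 0 * Cconj (dzb Phi z)))%C /\
    (forall A, A = (RtoC (jac Phi z) * (Cconj (dz Psi (Phi z)) * A) / (dz Phi z + 0 * Cconj (dzb Phi z)))%C)).
  { intros z Hz.
    assert (Jn : jac Phi z <> 0) by (apply Rgt_not_eq, Hjac; auto).
    destruct (chain4 O O' Phi Psi z Hop Hop' C1Phi C1Psi Hz (HPhi z Hz) Hinv1) as (E1 & E2 & E3 & E4).
    destruct (key Phi Psi z E1 E2 E3 E4 Jn) as [Hc Hd].
    apply (calg _ _ _ _ _ _ _ Hc Hd (Hbel z Hz)); auto.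
    - destruct (HBV z Hz) as (_ & _ & _ & _ & h). exact h.
    - apply jacC.
    - apply jacC. }
  split; [|split].
  - intros w Hw. remember (Psi w) as z eqn:Ez.
    assert (Hz : O z) by (subst z; auto).
    assert (Ew : w = Phi z) by (subst z; rewrite Hinv2; auto).
    subst w. unfold pullback, Kfac, D'; simpl. rewrite <- Ez.
    destruct (K z Hz) as (K1 & K2 & _ & _).
    split; [|split; [|split]]; auto.
  - intros w Hw. unfold D'; simpl.
    assert (Hz : O (Psi w)) by auto.
    destruct (HBV _ Hz) as (_ & cA & cB & cF & _).
    assert (cP : continuous Psi w) by exact (C1_cont O' Psi w Hop' C1Psi Hw).
    assert (cd : continuous (fun x => Cconj (dz Psi x)) w) by (apply cont_Cconj; exact (dz_cont O' Psi w C1Psi Hw)).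
    split; [apply cont_Cconst|].
    split; [apply cont_Cmult; auto; apply continuous_comp; auto|].
    split; [apply cont_Cmult; auto; apply continuous_comp; auto|].
    split; [apply cont_Cmult; auto; apply continuous_comp; auto|].
    rewrite Cmod_0. lra.
  - exists Phi. split.
    + exists Psi. exact Hpair'.
    + intros z Hz. unfold pullback, Kfac, D'; simpl.
      rewrite Hinv1 by auto.
      destruct (K z Hz) as (_ & _ & K3 & K4).
      split; [|split; [|split]]; auto.
Qed.
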